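(* Let $\Gamma=(G,\sigma)$, $G=(V,E)$, be a signed graph and $f:V\to\mathbb R$ a function not identically zero. Let $x$ be a vertex lying in two distinct weak nodal domains $D$ and $D'$ of $f$. Then the set $$B(x)=\{y\in V:\ \text{there exist } m \text{ and a walk } x=x_0\sim x_1\sim\cdots\sim x_m=y \text{ with } f(x_i)=0 \text{ for } i=0,1,\dots,m-1\}$$ is contained in $D\cup D'$ (as vertex sets). In particular, $\{y\in V: y\sim x\}\subseteq D\cup D'$.
   Context: A signed graph is a finite simple undirected graph $G=(V,E)$ with $\sigma:E\to\{+1,-1\}$. A walk is $y_1,\dots,y_m$ ($m\ge2$) with consecutive vertices adjacent. For $f:V\to\mathbb R$, a W-walk of $f$ is a walk such that for any two consecutive nonzeros $y_i,y_j$ along it ($i<j$, $f(y_i)\ne0\ne f(y_j)$, $f(y_l)=0$ for $i<l<j$) one has $f(y_i)\sigma_{y_iy_{i+1}}\cdots\sigma_{y_{j-1}y_j}f(y_j)>0$. On $\Omega=\{x:f(x)\ne0\}$ the relation ''$x=y$ or a W-walk connects $x$ and $y$'' is an equivalence relation with classes $W_1,\dots,W_q$; the weak nodal domains of $f$ are the induced subgraphs on $W_i^0=W_i\cup\{x\in V:\text{there is a W-walk from } x \text{ to some vertex of } W_i\}$. *)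

(* Defs.v *)
From mathcomp Require Import all_boot all_order all_algebra.
Set Implicit Arguments. Unset Strict Implicit. Unset Printing Implicit Defensive.
Import Order.TTheory GRing.Theory Num.Theory.
Local Open Scope ring_scope.

Definition signed_graph (V : finType) (R : realFieldType)
  (adj : rel V) (sigma : V -> V -> R) : Prop :=
  [/\ symmetric adj, irreflexive adj,
      (forall u v, adj u v -> sigma u v = 1 \/ sigma u v = -1)
    & (forall u v, adj u v -> sigma u v = sigma v u)].

Definition is_walk (V : finType) (adj : rel V) (s : seq V) : Prop :=
  match s with
  | [::] => False
  | x0 :: p => 0 < size p /\ path adj x0 p
  end%N.

Definition W_walk (V : finType) (R : realFieldType)
  (adj : rel V) (sigma : V -> V -> R) (f : V -> R) (s : seq V) : Prop :=
  match s with
  | [::] => False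
  | x0 :: _ =>
    is_walk adj s /\
    forall i j : nat, (i < j)%N -> (j < size s)%N ->
      f (nth x0 s i) != 0 -> f (nth x0 s j) != 0 ->
      (forall l : nat, (i < l < j)%N -> f (nth x0 s l) = 0) ->
      0 < f (nth x0 s i)
          * (\prod_(i <= k < j) sigma (nth x0 s k) (nth x0 s k.+1))
          * f (nth x0 s j)
  end.

Definition W_conn (V : finType) (R : realFieldType)
  (adj : rel V) (sigma : V -> V -> R) (f : V -> R) (x y : V) : Prop :=
  exists p : seq V, W_walk adj sigma f (x :: p) /\ last x p = y.

Definition W_rel (V : finType) (R : realFieldType)
  (adj : rel V) (sigma : V -> V -> R) (f : V -> R) (x y : V) : Prop :=
  x = y \/ W_conn adj sigma f x y \/ W_conn adj sigma f y x.

Definition W_class (V : finType) (R : realFieldType)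
  (adj : rel V) (sigma : V -> V -> R) (f : V -> R) (w : V) : V -> Prop :=
  fun y => f y != 0 /\ W_rel adj sigma f w y.

Definition weak_nodal_domain (V : finType) (R : realFieldType)
  (adj : rel V) (sigma : V -> V -> R) (f : V -> R) (w : V) : V -> Prop :=
  fun x => W_class adj sigma f w x \/
           exists y, W_class adj sigma f w y /\ W_conn adj sigma f x y.

Definition B_set (V : finType) (R : realFieldType)
  (adj : rel V) (f : V -> R) (x : V) : V -> Prop :=
  fun y => exists p : seq V, [/\ path adj x p, last x p = y &
                              all (fun v => f v == 0) (belast x p)].

(* Main.v *)
Require Import Defs.
From mathcomp Require Import all_boot all_order all_algebra.
From mathcomp Require Import ring lra.
Set Implicit Arguments. Unset Strict Implicit. Unset Printing Implicit Defensive.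
Import Order.TTheory GRing.Theory Num.Theory.
Local Open Scope ring_scope.

Section Pf.
Variables (V : finType) (R : realFieldType) (adj : rel V) (sigma : V -> V -> R) (f : V -> R).
Hypothesis hG : signed_graph adj sigma.

Definition pm1 (e : R) := (e == 1) || (e == -1).
Definition valid (v : V) (e : R) := pm1 e && ((f v == 0) || (0 < e * f v)).
Definition Hrel : rel (V * R) := fun s t =>
  [&& adj s.1 t.1, t.2 == s.2 * sigma s.1 t.1, valid s.1 s.2 & valid t.1 t.2].
Definition Hc (s t : V * R) := exists q, [/\ path Hrel s q, (0 < size q)%N & last s q = t].
Definition Heq s t := s = t \/ Hc s t.
Definition sgn (v : V) : R := if 0 < f v then 1 else -1.
Definition st v := (v, sgn v).

Lemma adj_sym u v : adj u v = adj v u.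
Proof. by case: hG => h _ _ _; rewrite h. Qed.
Lemma sig_pm1 u v : adj u v -> pm1 (sigma u v).
Proof. by case: hG => _ _ h _ /h [] ->; rewrite /pm1 eqxx ?orbT. Qed.
Lemma sig_sym u v : adj u v -> sigma u v = sigma v u.
Proof. by case: hG => _ _ _ h /h. Qed.
Lemma pm1M a b : pm1 a -> pm1 b -> pm1 (a * b).
Proof.
by rewrite /pm1 => /orP [] /eqP -> /orP [] /eqP ->;
  rewrite ?mul1r ?mulN1r ?opprK eqxx ?orbT.
Qed.
Lemma pm1_sq a : pm1 a -> a * a = 1.
Proof. by rewrite /pm1 => /orP [] /eqP ->; rewrite ?mul1r ?mulN1r ?opprK. Qed.
Lemma pm1_neq0 a : pm1 a -> a != 0.
Proof. by rewrite /pm1 => /orP [] /eqP ->; rewrite ?oppr_eq0 oner_eq0. Qed.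

Lemma Hrel_sym s t : Hrel s t -> Hrel t s.
Proof.
case: s t => [a e] [b e'] /and4P [/= hab /eqP he hva hvb].
apply/and4P; split => //=; first by rewrite adj_sym.
by rewrite he -(sig_sym hab) -mulrA pm1_sq ?mulr1 // sig_pm1.
Qed.

Lemma Hc_sym s t : Hc s t -> Hc t s.
Proof.
case=> q [hp hs hl]; exists (rev (belast s q)); split.
- rewrite -hl rev_path; apply: sub_path hp => x y; exact: Hrel_sym.
- by rewrite size_rev size_belast.
- case: q hp hs hl => [|z q] //= _ _ _; by rewrite rev_cons last_rcons.
Qed.

Lemma Hc_trans s t u : Hc s t -> Hc t u -> Hc s u.
Proof.
case=> q [hp hs hl] [q' [hp' hs' hl']]; exists (q ++ q'); split.
- by rewrite cat_path hp hl.
- by rewrite size_cat addn_gt0 hs.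
- by rewrite last_cat hl.
Qed.

Lemma Heq_sym s t : Heq s t -> Heq t s.
Proof. by case=> [->|h]; [left|right; apply: Hc_sym]. Qed.
Lemma Heq_trans s t u : Heq s t -> Heq t u -> Heq s u.
Proof.
case=> [->//|h1] [<-|h2]; [by right| right; exact: Hc_trans h1 h2].
Qed.

Lemma path_valid s q : path Hrel s q -> (0 < size q)%N ->
  valid s.1 s.2 /\ valid (last s q).1 (last s q).2.
Proof.
elim: q s => [//|x q IH] s /= /andP [hx hp] _.
have [_ _ hv1 hv2] := and4P hx.
split => //; case: q IH hp => [|y q] IH hp //=.
by case: (IH x hp).
Qed.

Lemma Hc_valid s t : Hc s t -> valid s.1 s.2 /\ valid t.1 t.2.
Proof. by case=> q [hp hs <-]; apply: path_valid. Qed.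

Lemma Heq_valid s t : Heq s t -> valid s.1 s.2 -> valid t.1 t.2.
Proof. by case=> [<-//|/Hc_valid []]. Qed.

Lemma valid_uniq v e : f v != 0 -> valid v e -> e = sgn v.
Proof.
move=> hf /andP [he]; rewrite (negbTE hf) /= /sgn.
case: (orP he) => /eqP -> h; first by rewrite mul1r in h; rewrite h.
rewrite mulN1r oppr_gt0 in h; by rewrite ltNge (ltW h).
Qed.

Lemma valid_sgn v : f v != 0 -> valid v (sgn v).
Proof.
move=> hf; rewrite /valid /sgn /pm1; case: ifP => h.
- by rewrite eqxx mul1r h orbT.
- rewrite eqxx orbT mulN1r oppr_gt0 /=; apply/orP; right.
  by rewrite lt_neqAle hf /= leNgt h.
Qed.

Lemma exists_valid v : exists e, valid v e.
Proof.
case: (eqVneq (f v) 0) => h; last by exists (sgn v); apply: valid_sgn.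
by exists 1; rewrite /valid /pm1 h !eqxx.
Qed.

Lemma prod_pm1 (sg : nat -> R) n :
  (forall k, (k < n)%N -> pm1 (sg k)) -> forall t, (t <= n)%N -> pm1 (\prod_(0 <= k < t) sg k).
Proof.
move=> h; elim=> [|t IH] ht; first by rewrite big_geq // /pm1 eqxx.
rewrite big_nat_recr //=; apply: pm1M; [apply: IH; exact: ltnW | exact: h].
Qed.

Lemma sign_choice (n : nat) (F sg : nat -> R) :
  (forall k, (k < n)%N -> pm1 (sg k)) ->
  (forall i j, (i < j)%N -> (j <= n)%N -> F i != 0 -> F j != 0 ->
     (forall l, (i < l < j)%N -> F l = 0) ->
     0 < F i * (\prod_(i <= k < j) sg k) * F j) ->
  exists c, pm1 c /\ forall t, (t <= n)%N -> F t != 0 ->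
     0 < c * (\prod_(0 <= k < t) sg k) * F t.
Proof.
move=> hsg hcond.
pose nz t := (t <= n)%N && (F t != 0).
case: (boolP (has nz (iota 0 n.+1))) => hhas; last first.
  exists 1; split; first by rewrite /pm1 eqxx.
  move=> t ht hft; move/hasPn: hhas => /(_ t); rewrite mem_iota /= add0n ltnS ht.
  by rewrite /nz ht hft => /(_ isT).
have exnz : exists t, nz t by case/hasP: hhas => t _ h; exists t.
case: (ex_minnP exnz) => i0 /andP [hi0n hfi0] hmin.
have hP := prod_pm1 hsg.
pose c : R := if 0 < (\prod_(0 <= k < i0) sg k) * F i0 then 1 else -1.
exists c; split; first by rewrite /c /pm1; case: ifP; rewrite eqxx ?orbT.
elim/ltn_ind => t IH ht hft.
case: (boolP (has (fun j => (j < t)%N && nz j) (iota 0 t))) => hprior.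
- have exj : exists j, (j < t)%N && nz j by case/hasP: hprior => j _ h; exists j.
  have ub : forall j, (j < t)%N && nz j -> (j <= t)%N by move=> j /andP [h _]; exact: ltnW.
  case: (ex_maxnP exj ub) => i /andP [hit /andP [hin hfi]] hmax.
  have IHi := IH i hit hin hfi.
  have hQ := hcond i t hit ht hfi hft.
  have hbetween : forall l, (i < l < t)%N -> F l = 0.
    move=> l /andP [h1 h2]; apply/eqP; apply/negPn/negP => hl.
    have := hmax l; rewrite h2 /nz hl (leq_trans (ltnW h2) ht) => /(_ isT).
    by rewrite leqNgt h1.
  move: (hQ hbetween) => {}hQ.
  rewrite (big_cat_nat (leq0n i) (ltnW hit)) /=.
  set A := c * \prod_(0 <= k < i) sg k in IHi *.
  set Q := \prod_(i <= k < t) sg k in hQ *.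
  have hA : pm1 A by apply: pm1M; [rewrite /c /pm1; case: ifP; rewrite eqxx ?orbT | apply: hP; exact: ltnW (leq_trans hit ht)].
  have e1 : F i * Q * F t = (A * F i) * (A * Q * F t).
    transitivity (A * A * (F i * Q * F t)); first by rewrite pm1_sq // mul1r.
    ring.
  rewrite e1 in hQ; rewrite mulrA.
  by rewrite pmulr_rgt0 in hQ.
- have hti0 : t = i0.
    apply/eqP; rewrite eqn_leq hmin /= ?/nz ?ht ?hft // andbT.
    rewrite leqNgt; apply/negP => hlt; move/hasPn: hprior => /(_ i0).
    by rewrite mem_iota /= add0n hlt /nz hi0n hfi0 => /(_ isT).
  subst t.
  have hnz : \prod_(0 <= k < i0) sg k * F i0 != 0 by rewrite mulf_neq0 // pm1_neq0 // hP.
  rewrite -mulrA /c; case: ifP => h; first by rewrite mul1r.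
  rewrite mulN1r oppr_gt0 lt_neqAle hnz /=; by rewrite leNgt h.
Qed.

Lemma last_iota_S m n : last m (iota m.+1 n) = (m + n)%N.
Proof. by elim: n m => [|n IH] m /=; [rewrite addn0 | rewrite IH addnS]. Qed.

Lemma W_to_H a b : W_conn adj sigma f a b -> exists ea eb, Hc (a, ea) (b, eb).
Proof.
case=> p [[[hsz hpath] hcond] hl].
pose F t := f (nth a (a :: p) t).
pose sg k := sigma (nth a (a :: p) k) (nth a (a :: p) k.+1).
have hadj : forall k, (k < size p)%N -> adj (nth a (a :: p) k) (nth a (a :: p) k.+1).
  by move=> k hk; exact: (pathP a hpath).
have hsg : forall k, (k < size p)%N -> pm1 (sg k) by move=> k hk; apply: sig_pm1; exact: hadj.
have [c [hc hpos]] : exists c, pm1 c /\ forall t, (t <= size p)%N -> F t != 0 ->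
     0 < c * (\prod_(0 <= k < t) sg k) * F t.
  apply: sign_choice; first exact: hsg.
  move=> i j hij hj hfi hfj hb.
  exact: (hcond i j hij hj hfi hfj hb).
pose g t := (nth a (a :: p) t, c * \prod_(0 <= k < t) sg k).
have hv : forall t, (t <= size p)%N -> valid (nth a (a :: p) t) (c * \prod_(0 <= k < t) sg k).
  move=> t ht; apply/andP; split; first by apply: pm1M => //; exact: prod_pm1 hsg t ht.
  case: (eqVneq (F t) 0) => h; first by rewrite /F in h; rewrite h.
  by rewrite hpos // orbT.
exists (g 0).2, (g (size p)).2.
exists (map g (iota 1 (size p))); split.
- apply/(pathP (g 0)) => i; rewrite size_map size_iota => hi.
  have -> : nth (g 0) (g 0 :: [seq g i | i <- iota 1 (size p)]) i = g i.
    case: i hi => [|i] hi //=.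
    by rewrite (nth_map 0) ?size_iota ?nth_iota ?add1n // ltnW.
  rewrite (nth_map 0) ?size_iota ?nth_iota ?add1n //.
  apply/and4P; split => /=.
  + exact: hadj.
  + by rewrite big_nat_recr //= mulrA.
  + exact: hv (ltnW hi).
  + exact: hv hi.
- by rewrite size_map size_iota.
- have -> : last (g 0) (map g (iota 1 (size p))) = g (size p) by rewrite last_map last_iota_S.
  rewrite /g /=.
  by congr pair; rewrite -hl; exact: (nth_last a (a :: p)).
Qed.

Lemma arith (Ei Ej P Fi Fj : R) : pm1 Ei -> Ej = Ei * P ->
  0 < Ei * Fi -> 0 < Ej * Fj -> 0 < Fi * P * Fj.
Proof.
move=> hE -> h1 h2.
have -> : Fi * P * Fj = (Ei * Fi) * (Ei * P * Fj).
  transitivity (Ei * Ei * (Fi * P * Fj)); first by rewrite pm1_sq // mul1r.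
  ring.
exact: mulr_gt0.
Qed.

Lemma nth_fst (s : seq (V * R)) x0 t : nth x0.1 (map fst s) t = (nth x0 s t).1.
Proof. by elim: s t => [|y s IH] [|t] //=. Qed.

Lemma H_to_W a ea b eb : Hc (a, ea) (b, eb) -> W_conn adj sigma f a b.
Proof.
case=> q [hp hs hl].
exists (map fst q); split; last first.
  by rewrite -[a]/((a, ea).1) last_map hl.
pose stt := (a, ea) :: q.
have hnth : forall t, nth a (a :: map fst q) t = (nth (a, ea) stt t).1.
  by move=> t; exact: (nth_fst stt (a, ea) t).
pose E t := (nth (a, ea) stt t).2.
pose Vt t := (nth (a, ea) stt t).1.
have hedge : forall k, (k < size q)%N -> Hrel (nth (a, ea) stt k) (nth (a, ea) stt k.+1).
  by move=> k hk; exact: (pathP (a, ea) hp).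
have hstep : forall k, (k < size q)%N -> E k.+1 = E k * sigma (Vt k) (Vt k.+1).
  by move=> k hk; case/and4P: (hedge k hk) => _ /eqP h _ _; exact: h.
have hvalid : forall t, (t <= size q)%N -> valid (Vt t) (E t).
  move=> t; rewrite leq_eqVlt => /orP [/eqP ->|ht].
  - case: (size q) hs (hedge (size q).-1) => // n _ /(_ (ltnSn n)) /and4P [] //.
  - by case/and4P: (hedge t ht).
have hprod : forall i j, (i <= j)%N -> (j <= size q)%N ->
    E j = E i * \prod_(i <= k < j) sigma (Vt k) (Vt k.+1).
  move=> i; elim=> [|j IH] hij hj.
    by move: hij; rewrite leqn0 => /eqP ->; rewrite big_geq // mulr1.
  case: (eqVneq i j.+1) => [->|hne]; first by rewrite big_geq // mulr1.
  have hij' : (i <= j)%N by rewrite -ltnS ltn_neqAle hne.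
  rewrite big_nat_recr //= mulrA -IH //; last exact: ltnW.
  exact: hstep.
split.
  split; first by rewrite size_map.
  rewrite -[a]/((a, ea).1) path_map; apply: sub_path hp => x y /and4P [] //.
move=> i j hij hj hfi hfj _.
have hj' : (j <= size q)%N by move: hj; rewrite /= size_map ltnS.
rewrite (eq_bigr (fun k => sigma (Vt k) (Vt k.+1))); last by move=> k _; rewrite !hnth.
rewrite !hnth in hfi hfj *.
have e := hprod i j (ltnW hij) hj'.
set P := \prod_(i <= k < j) _ in e *.
have /andP [hpm hvi] := hvalid i (leq_trans (ltnW hij) hj').
have /andP [_ hvj] := hvalid j hj'.
move: hvi hvj; rewrite /Vt (negbTE hfi) (negbTE hfj) /= => hvi hvj.
exact: (arith hpm e hvi hvj).
Qed.

Lemma Wrel_Heq w y : f w != 0 -> W_rel adj sigma f w y -> exists e, Heq (st w) (y, e).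
Proof.
move=> hw; case=> [<-|[h|h]]; first by exists (sgn w); left.
- have [ea [eb hc]] := W_to_H h.
  have [va _] := Hc_valid hc.
  rewrite /= in va; rewrite (valid_uniq hw va) in hc.
  by exists eb; right.
- have [ea [eb hc]] := W_to_H h.
  have [_ vb] := Hc_valid hc.
  rewrite /= in vb; rewrite (valid_uniq hw vb) in hc.
  by exists ea; right; apply: Hc_sym.
Qed.

Lemma wnd_iff w x : f w != 0 ->
  weak_nodal_domain adj sigma f w x <-> exists e, Heq (st w) (x, e).
Proof.
move=> hw; split.
- case=> [[fx hr]|[y [[fy hr] hc]]]; first exact: Wrel_Heq.
  have [e he] := Wrel_Heq hw hr.
  have ve := Heq_valid he (valid_sgn hw).
  rewrite /= in ve; have eE := valid_uniq fy ve.
  have [ex [ey hxy]] := W_to_H hc.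
  have [_ vy] := Hc_valid hxy.
  rewrite /= in vy; have eyE := valid_uniq fy vy.
  exists ex; apply: (Heq_trans he); apply: Heq_sym; right.
  by rewrite eE -eyE.
- case=> e he; case: (eqVneq (f x) 0) => hx.
  + right; exists w; split; first by split; [done | left].
    case: he => [[h _]|h]; first by rewrite h hx eqxx in hw.
    apply: (@H_to_W x e w (sgn w)); exact: Hc_sym h.
  + left; split => //.
    case: he => [[h _]|h]; first by left.
    by right; left; exact: H_to_W h.
Qed.

Lemma Bprop x p : path adj x p -> all (fun v => f v == 0) (belast x p) ->
  forall ey, valid (last x p) ey -> exists ex, pm1 ex /\ Heq (x, ex) (last x p, ey).
Proof.
elim: p x => [|z p IH] x /=.
  by move=> _ _ ey hv; exists ey; split; [case/andP: hv | left].
move=> /andP [hxz hp] /andP [hfx ha] ey hv.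
have [ez [pez hez]] := IH z hp ha ey hv.
have vz : valid z ez by have := Heq_valid (Heq_sym hez) hv.
exists (ez * sigma x z); split; first by apply: pm1M => //; exact: sig_pm1.
apply: Heq_trans hez; right; exists [:: (z, ez)]; split => //=.
rewrite andbT; apply/and4P; split => //=.
- by rewrite -mulrA pm1_sq ?mulr1 // sig_pm1.
- by rewrite /valid hfx andbT; apply: pm1M => //; exact: sig_pm1.
Qed.
End Pf.

Theorem corollary3p9 (V : finType) (R : realFieldType)
  (adj : rel V) (sigma : V -> V -> R) (f : V -> R)
  (hG : signed_graph adj sigma)
  (hf : exists v, f v != 0)
  (w w' x : V)
  (hw : f w != 0) (hw' : f w' != 0)
  (hdist : ~ (forall z, weak_nodal_domain adj sigma f w z <->
                        weak_nodal_domain adj sigma f w' z))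
  (hx : weak_nodal_domain adj sigma f w x)
  (hx' : weak_nodal_domain adj sigma f w' x) :
  (forall y, B_set adj f x y ->
     weak_nodal_domain adj sigma f w y \/ weak_nodal_domain adj sigma f w' y) /\
  (forall y, adj y x ->
     weak_nodal_domain adj sigma f w y \/ weak_nodal_domain adj sigma f w' y).
Proof.
have hiff := fun z => wnd_iff hG z hw.
have hiff' := fun z => wnd_iff hG z hw'.
have noeq : ~ Heq adj sigma f (st f w) (st f w').
  move=> h; apply: hdist => z; rewrite hiff hiff'.
  split => -[e he]; exists e.
  - exact: Heq_trans (Heq_sym hG h) he.
  - exact: Heq_trans h he.
move: hx hx' => /hiff [e he] /hiff' [e' he'].
have ve := Heq_valid he (valid_sgn hw).
have ve' := Heq_valid he' (valid_sgn hw').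
rewrite /= in ve ve'.
have hne : e != e'.
  apply/eqP => h; subst e'; apply: noeq; exact: Heq_trans he (Heq_sym hG he').
have cover : forall ex, pm1 ex -> Heq adj sigma f (st f w) (x, ex) \/ Heq adj sigma f (st f w') (x, ex).
  move=> ex hex; case/andP: ve => pe _; case/andP: ve' => pe' _.
  case/orP: pe => /eqP ?; case/orP: pe' => /eqP ?; case/orP: hex => /eqP ?;
    subst; rewrite ?eqxx in hne; by [left | right].
have fx0 : f x = 0.
  apply/eqP; apply/negPn/negP => hfx; move/negP: hne; apply.
  by rewrite (valid_uniq hfx ve) (valid_uniq hfx ve').
have P1 : forall y, B_set adj f x y ->
     weak_nodal_domain adj sigma f w y \/ weak_nodal_domain adj sigma f w' y.
  move=> y [p [hp hl ha]].
  have [ey vy] := exists_valid f y.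
  rewrite -hl in vy.
  have [ex [pex hh]] := Bprop hG hp ha vy.
  rewrite hl in hh.
  case: (cover ex pex) => h; [left; apply/hiff | right; apply/hiff'];
    exists ey; exact: Heq_trans h hh.
split => // y hy; apply: P1; exists [:: y]; split => //=.
- by rewrite andbT -(adj_sym hG).
- by rewrite fx0 eqxx.
Qed.
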